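(* Let $\mathcal{B}$ be a complete topological ring, let $\mathrm{e}\colon\mathcal{B}\to\mathcal{B}\{T\}$ be a restricted exponential homomorphism and let $s$ be a local slice for $\mathrm{e}$, with $\mathrm{e}(s)=s+s_1T$. Then the image $\sigma\in\widehat{\mathcal{B}_{s_1}}$ of the element $s_1^{-1}s\in\mathcal{B}_{s_1}$ by the separated completion homomorphism is a regular element (non-zero-divisor) of $\widehat{\mathcal{B}_{s_1}}$. Furthermore, if $\widehat{\mathcal{B}_{s_1}}$ is not the zero ring, then $\widehat{\mathrm{e}_{s_1}}(\sigma)=\sigma+T$.
   Context: Conventions: topological rings are linearly topologized with a countable fundamental system of open ideals; homomorphisms are continuous; complete means the canonical map to $\varprojlim_{\mathfrak{a}}\mathcal{B}/\mathfrak{a}$ (open ideals, discrete quotients) is a topological isomorphism. For complete $\mathcal{C}$, $\mathcal{C}\{T\}$, $\mathcal{C}\{T,T'\}$ denote restricted power series (coefficients converging to $0$), topologized by the ideals of series with all coefficients in a given open ideal. A restricted exponential homomorphism is a continuous ring homomorphism $\mathrm{e}\colon\mathcal{C}\to\mathcal{C}\{T\}$, $\mathrm{e}(c)=\sum_i\mathrm{e}_i(c)T^i$, with $\mathrm{e}_0=\mathrm{id}$ and $\sum_{i,j}\mathrm{e}_j(\mathrm{e}_i(c))T'^jT^i=\sum_\ell\mathrm{e}_\ell(c)(T+T')^\ell$ for all $c$. $\mathcal{B}^{\mathrm{e}}=\{b:\mathrm{e}(b)=b\}$. A local slice is $s\in\mathcal{B}$ with $\mathrm{e}(s)$ a polynomial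 of degree $1$ in $T$; writing $\mathrm{e}(s)=s+s_1T$ one has $s_1\in\mathcal{B}^{\mathrm{e}}$. $\widehat{\mathcal{B}_{s_1}}$ is the separated completion of the localization $\mathcal{B}_{s_1}=S^{-1}\mathcal{B}$, $S=\{s_1^n\}_{n\ge0}$, for the linear topology generated by the ideals $S^{-1}\mathfrak{b}$, $\mathfrak{b}$ open in $\mathcal{B}$; $\tilde j\colon\mathcal{B}\to\widehat{\mathcal{B}_{s_1}}$ is the canonical map and $\tilde j_T(\sum b_iT^i)=\sum\tilde j(b_i)T^i$. $\widehat{\mathrm{e}_{s_1}}\colon\widehat{\mathcal{B}_{s_1}}\to\widehat{\mathcal{B}_{s_1}}\{T\}$ is the unique restricted exponential homomorphism with $\tilde j_T\circ\mathrm{e}=\widehat{\mathrm{e}_{s_1}}\circ\tilde j$. *)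

(* Defs.v *)
From mathcomp Require Import all_boot all_algebra.
Set Implicit Arguments. Unset Strict Implicit. Unset Printing Implicit Defensive.
Import GRing.Theory.
Local Open Scope ring_scope.

(* Linearly topologized rings with a countable fundamental system of open  *)
(* ideals: the topology of B is given by a decreasing sequence of ideals    *)
(* I 0 ⊇ I 1 ⊇ ... ; the open ideals are those containing some I n.         *)
Definition is_ideal (B : comPzRingType) (P : B -> Prop) : Prop :=
  [/\ P 0, (forall x y, P x -> P y -> P (x + y)) & (forall a x, P x -> P (a * x))].

Definition is_lintop (B : comPzRingType) (I : nat -> B -> Prop) : Prop :=
  (forall n, is_ideal (I n)) /\ (forall n x, I n.+1 x -> I n x).

(* completeness: B -> lim_n B / I n is bijective (it is then automatically a *)
(* homeomorphism); injectivity = separatedness, surjectivity = every        *)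
(* compatible family of classes comes from an element of B.                 *)
Definition complete (B : comPzRingType) (I : nat -> B -> Prop) : Prop :=
  (forall b, (forall n, I n b) -> b = 0) /\
  (forall x : nat -> B, (forall n, I n (x n.+1 - x n)) ->
     exists b, forall n, I n (b - x n)).

(* A "setoid presentation" of a linearly topologized ring: a carrier, a     *)
(* domain predicate (the actual elements), an equality, ring operations and *)
(* the fundamental system of open ideals.  Used both for B itself (Leibniz  *)
(* equality, every element in the domain) and for the separated completion  *)
(* of B_{s1}, realized as the inverse limit of the B_{s1}/S^{-1} I n.       *)
Record sring := SRing {
  car :> Type;
  rdom : car -> Prop;
  req : car -> car -> Prop;
  r0 : car;
  r1 : car;
  radd : car -> car -> car;
  rmul : car -> car -> car;
  ropen : nat -> car -> Prop }.
Arguments rdom : clear implicits.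
Arguments req : clear implicits.
Arguments r0 : clear implicits.
Arguments r1 : clear implicits.
Arguments radd : clear implicits.
Arguments rmul : clear implicits.
Arguments ropen : clear implicits.

Definition rsum (R : sring) (f : nat -> car R) (n : nat) : car R :=
  foldr (fun k acc => radd R (f k) acc) (r0 R) (iota 0 n).

Definition rnat (R : sring) (k : nat) (x : car R) : car R :=
  iter k (radd R x) (r0 R).

(* A restricted exponential homomorphism e : R -> R{T}, e(x) = sum_i e i x T^i:
   - e maps (elements) to restricted series (coefficients -> 0),
   - e is a continuous ring homomorphism R -> R{T} (Cauchy product),
   - e_0 = id,
   - sum_{i,j} e_j(e_i c) T'^j T^i = sum_l e_l(c)(T+T')^l, i.e. comparing the
     coefficients of T^i T'^j : e_j (e_i c) = C(i+j,i) e_{i+j}(c).          *)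
Definition rexp (R : sring) (e : nat -> car R -> car R) : Prop :=
  (forall i x, rdom R x -> rdom R (e i x)) /\
  (forall i x y, rdom R x -> rdom R y -> req R x y -> req R (e i x) (e i y)) /\
  (forall x, rdom R x -> forall n, exists N, forall i, (N <= i)%N -> ropen R n (e i x)) /\
  (forall n, exists m, forall x, rdom R x -> ropen R m x -> forall i, ropen R n (e i x)) /\
  (forall i x y, rdom R x -> rdom R y ->
      req R (e i (radd R x y)) (radd R (e i x) (e i y))) /\
  (forall i x y, rdom R x -> rdom R y ->
      req R (e i (rmul R x y)) (@rsum R (fun k => rmul R (e k x) (e (i - k)%N y)) i.+1)) /\
  (forall i, req R (e i (r1 R)) (if i == 0%N then r1 R else r0 R)) /\
  (forall x, rdom R x -> req R (e 0%N x) x) /\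
  (forall i j x, rdom R x -> req R (e j (e i x)) (@rnat R 'C(i + j, i) (e (i + j)%N x))).

Definition ringS (B : comPzRingType) (I : nat -> B -> Prop) : sring :=
  @SRing B (fun _ => True) eq 0 1 +%R *%R I.

Definition local_slice (B : comPzRingType) (e : nat -> B -> B) (s : B) : Prop :=
  e 1%N s != 0 /\ (forall i, (2 <= i)%N -> e i s = 0).

(* Localization B_u = S^{-1} B, S = {u^n}: the pair (b, k) stands for b/u^k *)
Definition loc_eq (B : comPzRingType) (u : B) (x y : B * nat) : Prop :=
  exists m, u ^+ m * (x.1 * u ^+ y.2 - y.1 * u ^+ x.2) = 0.
Definition loc_add (B : comPzRingType) (u : B) (x y : B * nat) : B * nat :=
  (x.1 * u ^+ y.2 + y.1 * u ^+ x.2, (x.2 + y.2)%N).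
Definition loc_mul (B : comPzRingType) (x y : B * nat) : B * nat :=
  (x.1 * y.1, (x.2 + y.2)%N).
Definition loc_opp (B : comPzRingType) (x : B * nat) : B * nat := (- x.1, x.2).
Definition locI (B : comPzRingType) (I : nat -> B -> Prop) (u : B) (n : nat)
  (x : B * nat) : Prop :=
  exists a l, I n a /\ loc_eq u x (a, l).

(* Separated completion of B_u for the topology generated by the S^{-1} I n *)
(* = lim_n B_u / S^{-1} I n : compatible families of classes, two families   *)
(* being equal iff they agree in every B_u / S^{-1} I n; its fundamental     *)
(* system of open ideals is the kernels of the projections.                 *)
Definition lsub (B : comPzRingType) (u : B) (x y : B * nat) :=
  loc_add u x (loc_opp y).

Definition compl (B : comPzRingType) (I : nat -> B -> Prop) (u : B) : sring :=
  @SRing (nat -> B * nat)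
    (fun x => forall n, locI I u n (lsub u (x n.+1) (x n)))
    (fun x y => forall n, locI I u n (lsub u (x n) (y n)))
    (fun _ => (0, 0%N))
    (fun _ => (1, 0%N))
    (fun x y n => loc_add u (x n) (y n))
    (fun x y n => loc_mul (x n) (y n))
    (fun n x => locI I u n (x n)).

Definition jhat (B : comPzRingType) (I : nat -> B -> Prop) (u : B) (b : B) :
  car (compl I u) := fun _ => (b, 0%N).

Definition sigma_of (B : comPzRingType) (I : nat -> B -> Prop) (u s : B) :
  car (compl I u) := fun _ => (s, 1%N).

(* Main.v *)
Require Import Defs.
From mathcomp Require Import all_boot all_algebra.
From mathcomp Require Import ring.
Import GRing.Theory.
Local Open Scope ring_scope.

Section Helpers.
Set Implicit Arguments.
Unset Strict Implicit.

Definition Jn (B : comPzRingType) (I : nat -> B -> Prop) (u : B) n (a : B) :=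
  exists t, I n (u ^+ t * a).

Definition En (B : comPzRingType) (I : nat -> B -> Prop) (u : B) n (x y : B * nat) :=
  Jn I u n (x.1 * u ^+ y.2 - y.1 * u ^+ x.2).

Lemma locI_J (B : comPzRingType) (I : nat -> B -> Prop) (u : B) n x :
  is_ideal (I n) -> locI I u n x <-> Jn I u n x.1.
Proof.
case=> I0 ID IM; split.
  case=> c [l [Ic [m /= Hm]]]; exists (m + l)%N.
  have -> : u ^+ (m + l) * x.1 = u ^+ m * (x.1 * u ^+ l) by rewrite exprD; ring.
  have -> : u ^+ m * (x.1 * u ^+ l) = u ^+ m * (c * u ^+ x.2).
    by apply/eqP; rewrite -subr_eq0 -mulrBr; apply/eqP.
  have -> : u ^+ m * (c * u ^+ x.2) = (u ^+ m * u ^+ x.2) * c by ring.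
  by apply: IM.
case=> t Ht; exists (u ^+ t * x.1), (t + x.2)%N; split => //.
by exists 0%N => /=; rewrite exprD; ring.
Qed.

Lemma Jn0 B I u n : is_ideal (I n) -> @Jn B I u n 0.
Proof. by case=> I0 _ _; exists 0%N; rewrite mulr0. Qed.

Lemma JnD B I u n a b : is_ideal (I n) -> @Jn B I u n a -> Jn I u n b -> Jn I u n (a + b).
Proof.
case=> _ ID IM [t1 H1] [t2 H2]; exists (t1 + t2)%N.
have -> : u ^+ (t1 + t2) * (a + b) = u ^+ t2 * (u ^+ t1 * a) + u ^+ t1 * (u ^+ t2 * b).
  by rewrite exprD; ring.
by apply: ID; apply: IM.
Qed.

Lemma JnM B I u n c a : is_ideal (I n) -> @Jn B I u n a -> Jn I u n (c * a).
Proof.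
case=> _ ID IM [t H]; exists t.
have -> : u ^+ t * (c * a) = c * (u ^+ t * a) by ring.
by apply: IM.
Qed.

Lemma JnN B I u n a : is_ideal (I n) -> @Jn B I u n a -> Jn I u n (- a).
Proof. by move=> Hi H; rewrite -mulN1r; apply: JnM. Qed.

Lemma Jn_sat B I u n k a : is_ideal (I n) -> @Jn B I u n (u ^+ k * a) -> Jn I u n a.
Proof. by move=> _ [t H]; exists (t + k)%N; rewrite exprD -mulrA. Qed.

Lemma Jn_eq B I u n a b : a = b -> @Jn B I u n a -> Jn I u n b.
Proof. by move=> ->. Qed.

Lemma Jn_mono B I u m n a : is_lintop I -> (n <= m)%N -> @Jn B I u m a -> Jn I u n a.
Proof.
move=> [_ Hd]; elim: m => [|m IH]; first by rewrite leqn0 => /eqP ->.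
rewrite leq_eqVlt => /orP [/eqP -> //|Hlt] [t Ht].
by apply: IH => //; exists t; apply: Hd.
Qed.

Lemma En_refl B I u n x : is_ideal (I n) -> @En B I u n x x.
Proof. by move=> Hi; rewrite /En subrr; apply: Jn0. Qed.

Lemma En_sym B I u n x y : is_ideal (I n) -> @En B I u n x y -> En I u n y x.
Proof. by move=> Hi H; rewrite /En -opprB; apply: JnN. Qed.

Lemma En_trans B I u n x y z : is_ideal (I n) ->
  @En B I u n x y -> En I u n y z -> En I u n x z.
Proof.
move=> Hi H1 H2; rewrite /En; apply: (@Jn_sat _ _ _ _ y.2) => //.
have -> : u ^+ y.2 * (x.1 * u ^+ z.2 - z.1 * u ^+ x.2) =
  u ^+ z.2 * (x.1 * u ^+ y.2 - y.1 * u ^+ x.2) + u ^+ x.2 * (y.1 * u ^+ z.2 - z.1 * u ^+ y.2)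
  by ring.
by apply: JnD => //; apply: JnM.
Qed.

Lemma En_mul B I u n x x' y y' : is_ideal (I n) ->
  @En B I u n x x' -> En I u n y y' -> En I u n (loc_mul x y) (loc_mul x' y').
Proof.
move=> Hi H1 H2; rewrite /En /=.
have -> : x.1 * y.1 * u ^+ (x'.2 + y'.2) - x'.1 * y'.1 * u ^+ (x.2 + y.2) =
  y.1 * u ^+ y'.2 * (x.1 * u ^+ x'.2 - x'.1 * u ^+ x.2) +
  x'.1 * u ^+ x.2 * (y.1 * u ^+ y'.2 - y'.1 * u ^+ y.2) by rewrite !exprD; ring.
by apply: JnD => //; apply: JnM.
Qed.

Lemma En_zero_add B I u n x y : is_ideal (I n) ->
  @En B I u n x (0, 0%N) -> En I u n (loc_add u x y) y.
Proof.
move=> Hi; rewrite /En /= mul0r subr0 expr0 mulr1 => H.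
have -> : (x.1 * u ^+ y.2 + y.1 * u ^+ x.2) * u ^+ y.2 - y.1 * u ^+ (x.2 + y.2)
  = (u ^+ y.2 * u ^+ y.2) * x.1 by rewrite exprD; ring.
by apply: JnM.
Qed.

Lemma En_add0 B I u n x : is_ideal (I n) -> @En B I u n (loc_add u x (0, 0%N)) x.
Proof.
move=> Hi; rewrite /En /=; apply: (Jn_eq (a := 0)); last by apply: Jn0.
by rewrite addn0 expr0; ring.
Qed.

Lemma foldr_zero_En (B : comPzRingType) (I : nat -> B -> Prop) (u : B) n (g : nat -> B * nat) (l : seq nat) z : is_ideal (I n) ->
  (forall k, k \in l -> @En B I u n (g k) (0, 0%N)) ->
  En I u n (foldr (fun k acc => loc_add u (g k) acc) z l) z.
Proof.
move=> Hi; elim: l => [|k l IH] H /=; first by apply: En_refl.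
apply: En_trans (IH _) => //; last by move=> j Hj; apply: H; rewrite inE Hj orbT.
by apply: En_zero_add => //; apply: H; rewrite inE eqxx.
Qed.

Lemma rsum_at B I u (f : nat -> car (compl I u)) (l : seq nat) n :
  foldr (fun k acc => radd (@compl B I u) (f k) acc) (r0 (compl I u)) l n =
  foldr (fun k acc => loc_add u (f k n) acc) (0, 0%N) l.
Proof. by elim: l => //= k l ->. Qed.

Lemma foldr_zeroB (B : comPzRingType) (f : nat -> B) (l : seq nat) :
  (forall k, k \in l -> f k = 0) -> foldr (fun k acc => f k + acc) 0 l = 0.
Proof.
elim: l => [|k l IH] H //=; rewrite H ?inE ?eqxx // add0r IH // => j Hj.
by apply: H; rewrite inE Hj orbT.
Qed.

Lemma rnat0 B I k : @rnat (@ringS B I) k 0 = 0.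
Proof. by elim: k => //= k ->; rewrite addr0. Qed.

End Helpers.

Lemma locI_E (B : comPzRingType) (I : nat -> B -> Prop) (u : B) n x y :
  is_ideal (I n) -> locI I u n (lsub u x y) <-> En I u n x y.
Proof.
move=> Hi; rewrite locI_J // /En /=; split; apply: Jn_eq; ring.
Qed.

Theorem lemma2p14 (B : comPzRingType) (I : nat -> B -> Prop) (e : nat -> B -> B) (s : B) :
  is_lintop I -> complete I -> @rexp (ringS I) e -> local_slice e s ->
  let C := compl I (e 1%N s) in
  let sigma := sigma_of I (e 1%N s) s in
  (* sigma is a regular element (non-zero-divisor) of C *)
  (forall y : car C, rdom C y -> req C (rmul C sigma y) (r0 C) -> req C y (r0 C)) /\
  (* if C is not the zero ring, then ehat(sigma) = sigma + T, where ehat is the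
     (unique) restricted exponential homomorphism of C with jhat_T o e = ehat o jhat *)
  (~ req C (r1 C) (r0 C) ->
   forall ehat : nat -> car C -> car C,
     @rexp C ehat ->
     (forall i b, req C (ehat i (jhat I (e 1%N s) b)) (jhat I (e 1%N s) (e i b))) ->
     [/\ req C (ehat 0%N sigma) sigma,
         req C (ehat 1%N sigma) (r1 C)
       & forall i, (2 <= i)%N -> req C (ehat i sigma) (r0 C)]).
Proof.
move=> Hlt Hcomp [_ [_ [He3 [He4 [_ [He6 [_ [He8 He9]]]]]]]] [_ Hs2] C sigma.
set u := e 1%N s.
have Hid : forall n, is_ideal (I n) by case: Hlt.
have LJ : forall n x, locI I u n x <-> Jn I u n x.1 by move=> n x; apply: locI_J.
have LE : forall n x y, locI I u n (lsub u x y) <-> En I u n x y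
  by move=> n x y; apply: locI_E.
have e0s : e 0%N s = s by apply: He8.
have key : forall n, exists m, forall a, Jn I u m (s * a) -> Jn I u n a.
  move=> n; case: (He4 n) => m Hm; exists m => a [t0 Ht0].
  set a' := u ^+ t0 * a.
  have Hsa : I m (s * a') by rewrite /a' mulrCA.
  have Hei : forall i, I n (e i (s * a')) by move=> i; apply: Hm.
  have Hrec : forall N, I n (u * e N a' + s * e N.+1 a').
    move=> N; have := Hei N.+1; rewrite He6 //=.
    rewrite /rsum /= subn0 subSS subn0.
    rewrite foldr_zeroB; last first.
      by move=> k; rewrite mem_iota => /andP [Hk _]; rewrite Hs2 // mul0r.
    by rewrite e0s addr0 addrC.
  have Hind : forall N, I n (u ^+ N * a' - (- s) ^+ N * e N a').
    elim=> [|N IH]; first by rewrite !expr0 !mul1r He8 // subrr; case: (Hid n).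
    have -> : u ^+ N.+1 * a' - (- s) ^+ N.+1 * e N.+1 a' =
      u * (u ^+ N * a' - (- s) ^+ N * e N a') + (- s) ^+ N * (u * e N a' + s * e N.+1 a').
      by rewrite !exprS; ring.
    by case: (Hid n) => _ ID IM; apply: ID; apply: IM.
  case: (He3 a' Logic.I n) => N0 HN0.
  exists (N0 + t0)%N; rewrite exprD -mulrA -/a'.
  have -> : u ^+ N0 * a' = (u ^+ N0 * a' - (- s) ^+ N0 * e N0 a') + (- s) ^+ N0 * e N0 a'
    by ring.
  by case: (Hid n) => _ ID IM; apply: ID; [apply: Hind | apply: IM; apply: HN0].
split.
  move=> y Hy Hsy n.
  apply/LJ => /=.
  case: (key n) => m Hm.
  set M := maxn m n.
  have HyM : Jn I u n (y M).1.
    apply: Hm; apply: (@Jn_mono _ _ _ M) => //; first by apply: leq_maxl.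
    have := Hsy M; move/LJ => /=; apply: Jn_eq; rewrite expr0; ring.
  have Hyc : forall k, En I u n (y (n + k)%N) (y n).
    elim=> [|k IH]; first by rewrite addn0; apply: En_refl.
    apply: En_trans IH => //.
    have := Hy (n + k)%N; move/LJ; rewrite addnS => H.
    apply: (Jn_mono Hlt (leq_addr k n)); move: H; apply: Jn_eq => /=; ring.
  have HMn : (n <= M)%N by apply: leq_maxr.
  have := Hyc (M - n)%N; rewrite subnKC // /En => H.
  apply: (@Jn_eq _ _ _ _ (y n).1); first by rewrite expr0; ring.
  apply: (@Jn_sat _ _ _ _ (y M).2) => //.
  have -> : u ^+ (y M).2 * (y n).1 = (u ^+ (y n).2) * (y M).1 -
     ((y M).1 * u ^+ (y n).2 - (y n).1 * u ^+ (y M).2) by ring.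
  apply: JnD => //; first by apply: JnM.
  by apply: JnN.
move=> _ ehat [_ [Hcong [_ [_ [_ [Hmul _]]]]]] Hj.
have Hdomc : forall x : car C, (forall n, x n = x 0%N) -> rdom C x.
  move=> x Hx n; apply/LJ => /=; rewrite !Hx.
  by apply: (@Jn_eq _ _ _ _ 0); [ring | exact: Jn0].
have Hsig : rdom C sigma by apply: Hdomc.
have Hju : rdom C (jhat I u u) by apply: Hdomc.
have Hprod : rdom C (rmul C sigma (jhat I u u)) by apply: Hdomc.
have Hjs : rdom C (jhat I u s) by apply: Hdomc.
have Heu : forall j, (1 <= j)%N -> e j u = 0.
  move=> j Hj1; rewrite /u He9 // Hs2; first by apply: rnat0.
  by rewrite add1n ltnS.
have main : forall i n, En I u n (loc_mul (ehat i sigma n) (u, 0%N)) (e i s, 0%N).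
  move=> i n.
  have H1 : En I u n (ehat i (jhat I u s) n) (e i s, 0%N).
    by have := Hj i s n; move/LE.
  have H2 : En I u n (ehat i (rmul C sigma (jhat I u u)) n) (ehat i (jhat I u s) n).
    have Hpj : req C (rmul C sigma (jhat I u u)) (jhat I u s).
      move=> k; apply/LE; rewrite /En /= addn0 expr1 expr0.
      by apply: (@Jn_eq _ _ _ _ 0); [ring | exact: Jn0].
    by have := Hcong i _ _ Hprod Hjs Hpj n; move/LE.
  have H3 := Hmul i _ _ Hsig Hju n; move/LE: H3 => H3.
  have Hio : iota 0 i.+1 = iota 0 i ++ [:: i] by rewrite -addn1 iotaD.
  rewrite /rsum rsum_at Hio foldr_cat /= in H3.
  set g := (fun k => loc_mul (ehat k sigma n) (ehat (i - k)%N (jhat I u u) n)).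
  have H4 : En I u n (foldr (fun k acc => loc_add u (g k) acc)
             (loc_add u (g i) (0, 0%N)) (iota 0 i)) (loc_add u (g i) (0, 0%N)).
    apply: foldr_zero_En => // k; rewrite mem_iota add0n => /andP [_ Hk].
    rewrite /g; apply: (@En_trans _ _ _ _ _ (loc_mul (ehat k sigma n) (0, 0%N))) => //.
      apply: En_mul => //; first by apply: En_refl.
      have := Hj (i - k)%N u n; move/LE; rewrite Heu // subn_gt0 //.
    rewrite /En /=; apply: (Jn_eq (a := 0)); [ring | apply: Jn0] => //.
  have H5 : En I u n (g i) (loc_mul (ehat i sigma n) (u, 0%N)).
    rewrite /g subnn; apply: En_mul => //; first by apply: En_refl.
    by have := Hj 0%N u n; move/LE; rewrite He8.
  apply: (En_trans _ (En_sym _ H5)) => //.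
  apply: (En_trans _ (En_sym _ (En_add0 u (g i) (Hid n)))) => //.
  apply: (En_trans _ (En_sym _ H4)) => //.
  apply: (En_trans _ (En_sym _ H3)) => //.
  by apply: En_trans H2 H1.
have fin : forall i n (tgt : B * nat),
   (forall a k, Jn I u n (a * u * u ^+ 0 - e i s * u ^+ (k + 0)) ->
                Jn I u n (a * u ^+ tgt.2 - tgt.1 * u ^+ k)) ->
   locI I u n (lsub u (ehat i sigma n) tgt).
  move=> i n tgt Ht; apply/LE; have := main i n.
  case: (ehat i sigma n) => a k; rewrite /En /=; apply: Ht.
split.
- move=> n; apply: fin => a k /=; rewrite e0s; apply: Jn_eq.
  by rewrite expr1 addn0; ring.
- move=> n; apply: fin => a k /= H; apply: (@Jn_sat _ _ _ _ 1%N) => //.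
  by move: H; rewrite -/u; apply: Jn_eq; rewrite addn0 expr1 expr0; ring.
- move=> i Hi n; apply: fin => a k /= H; apply: (@Jn_sat _ _ _ _ 1%N) => //.
  by move: H; apply: Jn_eq; rewrite Hs2 //; ring.
Qed.
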